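(* Let $n\geqslant 3$ and $N=2^n-1$. Let $$\mathcal{W}_n=\Big\{(x_1,\dots,x_n,y_1,\dots,y_n)\in\mathbb{Z}^{2n}:\ y_1\cdots y_n\neq 0,\ \sum_{i=1}^n x_i\prod_{j\neq i}y_j=0\Big\}$$ and let $\mathcal{A}_n$ be the set of $(\mathbf{x}';(z_h)_{1\leqslant h\leqslant N})\in\mathbb{Z}^n\times(\mathbb{Z}\smallsetminus\{0\})^{N}$ such that $(z_h)$ is reduced, $z_h>0$ whenever $s(h)\geqslant 2$, and $$\sum_{j=1}^n\Big(\prod_{1\leqslant h\leqslant N}z_h^{1-\varepsilon_j(h)}\Big)z_{2^{j-1}}x'_j=0.$$ Then the map $$(\mathbf{x}';(z_h))\longmapsto\Big(z_1x'_1,z_2x'_2,\dots,z_{2^{n-1}}x'_n,\ \prod_{h}z_h^{\varepsilon_1(h)},\dots,\prod_h z_h^{\varepsilon_n(h)}\Big)$$ is a bijection from $\mathcal{A}_n$ onto $\mathcal{W}_n$.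
   Context: For $h\in\{1,\dots,N\}$ write $h=\sum_j\varepsilon_j(h)2^{j-1}$ with $\varepsilon_j(h)\in\{0,1\}$ and $s(h)=\sum_j\varepsilon_j(h)$; $h\preceq\ell$ means $\varepsilon_j(h)\leqslant\varepsilon_j(\ell)$ for all $j$. An $N$-tuple of nonzero integers $(z_h)$ is reduced if $\gcd(z_h,z_\ell)=1$ whenever $h,\ell$ are incomparable for $\preceq$. Note $z_{2^{j-1}}$ is the entry with index $h=2^{j-1}$. *)

(* Defs.v *)
From mathcomp Require Import all_boot all_order all_algebra.
Set Implicit Arguments. Unset Strict Implicit. Unset Printing Implicit Defensive.
Import Order.TTheory GRing.Theory Num.Theory.
Local Open Scope ring_scope.

Definition NN (n : nat) : nat := (2 ^ n - 1)%N.

(* Binary digits, with 0-based digit index: eps j h = epsilon_{j+1}(h)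
   in the paper's 1-based notation, i.e. h = sum_j eps j h * 2^j. *)
Definition eps (j h : nat) : bool := odd (h %/ 2 ^ j).

(* s(h) = number of binary digits 1 of h (for h < 2^n all digits are < n) *)
Definition sdig (n h : nat) : nat := (\sum_(j < n) eps j h)%N.

(* h \preceq l : digitwise comparison (digits of index >= n vanish for h,l <= N) *)
Definition preceq (n h l : nat) : bool := [forall j : 'I_n, eps j h ==> eps j l].

(* The tuple z = (z_1,...,z_N) is stored 0-based; zv z h = z_h for 1 <= h <= N. *)
Definition zv (n : nat) (z : (NN n).-tuple int) (h : nat) : int := nth 0 z h.-1.

Definition reduced (n : nat) (z : (NN n).-tuple int) : Prop :=
  forall h l : nat, (1 <= h <= NN n)%N -> (1 <= l <= NN n)%N ->
    ~~ preceq n h l -> ~~ preceq n l h -> gcdz (zv z h) (zv z l) = 1.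

Definition zprod (n : nat) (z : (NN n).-tuple int) (e : nat -> nat) : int :=
  \prod_(1 <= h < (NN n).+1) zv z h ^+ e h.

Definition inA (n : nat) (a : {ffun 'I_n -> int} * (NN n).-tuple int) : Prop :=
  let: (x', z) := a in
  [/\ forall h, (1 <= h <= NN n)%N -> zv z h != 0,
      reduced z,
      forall h, (1 <= h <= NN n)%N -> (2 <= sdig n h)%N -> 0 < zv z h &
      \sum_(j < n) zprod z (fun h => (1 - eps j h)%N) * zv z (2 ^ j) * x' j = 0].

Definition inW (n : nat) (w : {ffun 'I_n -> int} * {ffun 'I_n -> int}) : Prop :=
  let: (x, y) := w in
  \prod_(i < n) y i != 0 /\
  \sum_(i < n) x i * \prod_(j < n | j != i) y j = 0.

Definition phiA (n : nat) (a : {ffun 'I_n -> int} * (NN n).-tuple int)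
  : {ffun 'I_n -> int} * {ffun 'I_n -> int} :=
  let: (x', z) := a in
  ([ffun j : 'I_n => zv z (2 ^ j) * x' j],
   [ffun j : 'I_n => zprod z (fun h => nat_of_bool (eps j h))]).

(* Main.v *)
Require Import Defs.
From mathcomp Require Import all_boot all_order all_algebra zify ring.
Set Implicit Arguments. Unset Strict Implicit. Unset Printing Implicit Defensive.


Lemma digits_mod n h : h %% 2 ^ n = \sum_(j < n) eps j h * 2 ^ j.
Proof.
elim: n => [|n IH]; first by rewrite expn0 modn1 big_ord0.
rewrite big_ord_recr /= -IH /eps.
have e1 : h = h %/ 2 ^ n * 2 ^ n + h %% 2 ^ n by rewrite -divn_eq.
have e2 : h %/ 2 ^ n = h %/ 2 ^ n.+1 * 2 + odd (h %/ 2 ^ n).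
  by rewrite expnSr divnMA {1}(divn_eq (h %/ 2 ^ n) 2) modn2 addnC.
have lt : h %% 2 ^ n < 2 ^ n by rewrite ltn_mod expn_gt0.
rewrite {1}e1 {1}e2 mulnDl -mulnA -expnS -addnA modnMDl modn_small.
  by rewrite addnC.
rewrite expnS; case: (odd _) => /=; lia.
Qed.

Lemma digits_eq n h : h < 2 ^ n -> h = \sum_(j < n) eps j h * 2 ^ j.
Proof. by move=> lt; rewrite -digits_mod modn_small. Qed.

Lemma digits_inj n h l : h < 2 ^ n -> l < 2 ^ n ->
  (forall j : 'I_n, eps j h = eps j l) -> h = l.
Proof.
move=> hh hl e; rewrite (digits_eq hh) (digits_eq hl).
by apply: eq_bigr => j _; rewrite e.
Qed.

Definition code n (P : 'I_n -> bool) := \sum_(i < n) P i * 2 ^ i.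

Lemma code_lt n P : @code n P < 2 ^ n.
Proof.
elim: n P => [|n IH] P; first by rewrite /code big_ord0.
rewrite /code big_ord_recr /=.
have := IH (fun i => P (widen_ord (leqnSn n) i)); rewrite /code => h.
move: h; set s := \sum_(i < n) _; move=> h. rewrite expnS; case: (P _) => /=; lia.
Qed.

Lemma eps_code n P (j : 'I_n) : eps j (@code n P) = P j.
Proof.
elim: n P j => [|n IH] P j; first by case: j.
rewrite /code big_ord_recr /=.
set c := \sum_(i < n) _.
have hc : c < 2 ^ n by have := code_lt (fun i => P (widen_ord (leqnSn n) i)).
case: (unliftP ord_max j) => [j' ->|->].
- have := IH (fun i => P (widen_ord (leqnSn n) i)) j'.
  rewrite /code -/c.
  have -> : widen_ord (leqnSn n) j' = lift ord_max j' by apply: val_inj; rewrite /= /bump leqNgt ltn_ord.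
  move=> <-.
  rewrite /eps /= /bump leqNgt ltn_ord /= add0n.
  have hj : j' < n by apply: ltn_ord.
  move: (P ord_max) => b; move: (nat_of_ord j') hj => jj hj.
  rewrite -(subnKC (ltnW hj)) expnD (mulnC (2 ^ jj)) mulnA divnDMl ?expn_gt0 //.
  have : 0 < n - jj by rewrite subn_gt0.
  case: (n - jj) => // k _; rewrite expnS oddD oddM oddM /= andbF addbF //.
- rewrite /eps /= divnDMl ?expn_gt0 // divn_small // add0n; by case: (P _).
Qed.


Lemma eps_pow j k : eps j (2 ^ k) = (j == k).
Proof.
rewrite /eps; case: (ltnP k j) => hkj.
- rewrite divn_small ?ltn_exp2l // gtn_eqF //.
- rewrite -(subnKC hkj) expnD mulKn ?expn_gt0 //.
  case e: (k - j) => [|m]; first by rewrite addn0 eqxx.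
  rewrite expnS oddM /= -[X in X == _]addn0 eqn_add2l //.
Qed.

Lemma eps0 j : eps j 0 = false.
Proof. by rewrite /eps div0n. Qed.

Lemma code_pos n (P : 'I_n -> bool) j : P j -> 0 < code P.
Proof.
move=> Pj; rewrite lt0n; apply/negP => /eqP e.
by have := eps_code P j; rewrite e eps0 Pj.
Qed.

Lemma has_digit n h : 0 < h < 2 ^ n -> exists j : 'I_n, eps j h.
Proof.
case/andP=> h0 hlt; apply/existsP; case: existsP => // H.
have H' : forall j : 'I_n, ~~ eps j h by move=> j; apply/negP => hj; apply: H; exists j.
move: h0; rewrite (digits_eq hlt) big1 // => j _.
by rewrite (negbTE (H' j)).
Qed.

Lemma preceq_leq n h l : h < 2 ^ n -> preceq n h l -> h <= l.
Proof.
move=> hlt /forallP P.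
rewrite (digits_eq hlt) (leq_trans _ (leq_mod l (2 ^ n))) // digits_mod.
apply: leq_sum => j _; have := P j; case: (eps j h) => //= ->; by [].
Qed.

Lemma sdig_pow n (k : 'I_n) : sdig n (2 ^ k) = 1.
Proof.
rewrite /sdig (bigD1 k) //= eps_pow eqxx big1 // => j /negbTE hj.
by rewrite eps_pow val_eqE hj.
Qed.

Lemma sdig_ge n h (j : 'I_n) : eps j h -> 1 <= sdig n h.
Proof. by move=> hj; rewrite /sdig (bigD1 j) //= hj. Qed.

Lemma sdig_one n h (j : 'I_n) : h < 2 ^ n -> eps j h -> sdig n h <= 1 -> h = 2 ^ j.
Proof.
move=> hlt hj; rewrite /sdig (bigD1 j) //= hj add1n ltnS leqn0 => /eqP s0.
apply: (digits_inj hlt); first by rewrite ltn_exp2l.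
move=> i; rewrite eps_pow val_eqE; case: (eqVneq i j) => [->|ne]; first by rewrite hj.
apply/negP => hi.
have : (eps i h <= \sum_(i0 < n | i0 != j) eps i0 h)%N.
  by rewrite (bigD1 i) //= leq_addr.
by rewrite s0 hi.
Qed.


Definition Yn n (Z : nat -> nat) (j : 'I_n) := \prod_(1 <= h < (NN n).+1) Z h ^ eps j h.
Definition posn n (Z : nat -> nat) := forall h, 1 <= h <= NN n -> 0 < Z h.
Definition redn n (Z : nat -> nat) := forall h l, 1 <= h <= NN n -> 1 <= l <= NN n ->
  ~~ preceq n h l -> ~~ preceq n l h -> coprime (Z h) (Z l).

Lemma inN n h : (1 <= h <= NN n) = (0 < h < 2 ^ n).
Proof. rewrite /NN; have := expn_gt0 2 n; lia. Qed.

Lemma pow_inN n (k : 'I_n) : 1 <= 2 ^ k <= NN n.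
Proof. by rewrite inN; apply/andP; split; [rewrite expn_gt0 | rewrite ltn_exp2l]. Qed.

Lemma preceq_refl n h : preceq n h h.
Proof. by apply/forallP => j; exact: implybb. Qed.

Lemma prime_not_dvd1 p : prime p -> ~~ (p %| 1).
Proof. by move=> pp; rewrite dvdn1; apply/eqP => e; move: pp; rewrite e. Qed.

Lemma split_at (R : Type) (idx : R) (op : Monoid.com_law idx) (F : nat -> R) a b l :
  a <= l < b -> \big[op/idx]_(a <= h < b) F h = op (F l) (\big[op/idx]_(a <= h < b | h != l) F h).
Proof. by move=> hl; rewrite (bigD1_seq l) ?mem_index_iota ?iota_uniq. Qed.

Lemma dvd_Y n Z (j : 'I_n) l : 1 <= l <= NN n -> eps j l -> Z l %| Yn Z j.
Proof.
move=> hl hj; rewrite /Yn (split_at _ _ (l := l)) ?ltnS // hj expn1.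
exact: dvdn_mulr.
Qed.

Lemma Yn_pos n Z (j : 'I_n) : posn n Z -> 0 < Yn Z j.
Proof.
move=> P; rewrite /Yn big_seq; apply: (big_ind (fun x => 0 < x)) => //.
  by move=> a b ha hb; rewrite muln_gt0 ha hb.
move=> h; rewrite mem_index_iota ltnS => hh.
by rewrite expn_gt0 P ?orbT.
Qed.

Lemma prime_dvd_big p (I : eqType) (r : seq I) (P : pred I) (F : I -> nat) :
  prime p -> p %| \prod_(i <- r | P i) F i -> exists2 i, i \in r & P i && (p %| F i).
Proof.
move=> pp; elim: r => [|x r IH]; first by rewrite big_nil dvdn1 => /eqP e; move: pp; rewrite e.
rewrite big_cons; case Px: (P x).
- rewrite Euclid_dvdM // => /orP [h|h]; first by exists x; rewrite ?mem_head ?Px.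
  by case: (IH h) => i ir Hi; exists i; rewrite ?in_cons ?ir ?orbT.
- by move=> h; case: (IH h) => i ir Hi; exists i; rewrite ?in_cons ?ir ?orbT.
Qed.

Lemma dvd_Y_inv n Z (i : 'I_n) p : prime p -> p %| Yn Z i ->
  exists l, [/\ 1 <= l <= NN n, eps i l & p %| Z l].
Proof.
move=> pp /(prime_dvd_big pp) [l]; rewrite mem_index_iota ltnS => hl /andP [_].
rewrite Euclid_dvdX // => /andP [hd he]; exists l; split => //; by case: (eps i l) he.
Qed.

Lemma key n Z p (j : 'I_n) : posn n Z -> redn n Z -> prime p -> p %| Yn Z j ->
  exists H, [/\ 1 <= H <= NN n, p %| Z H & forall i : 'I_n, eps i H = (p %| Yn Z i)].
Proof.
move=> P R pp hj.
pose Q := fun h => (1 <= h <= NN n) && (p %| Z h).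
have exQ : exists h, Q h.
  by case: (dvd_Y_inv pp hj) => l [hl _ hd]; exists l; rewrite /Q hl hd.
have ubQ : forall h, Q h -> h <= NN n by move=> h /andP [/andP [_ ->]].
case: (ex_maxnP exQ ubQ) => H /andP [hH hdH] maxH.
have below : forall l, 1 <= l <= NN n -> p %| Z l -> preceq n l H.
  move=> l hl hdl.
  case: (boolP (preceq n l H)) => // nlH.
  case: (boolP (preceq n H l)) => [hHl|nHl].
    have e : H = l.
      apply/eqP; rewrite eqn_leq maxH /Q ?hl ?hdl // andbT.
      by apply: (preceq_leq _ hHl); move: hH; rewrite inN => /andP [].
    by move: nlH; rewrite -e preceq_refl.
  have := R _ _ hH hl nHl nlH; rewrite /coprime => /eqP g.
  have : p %| gcdn (Z H) (Z l) by rewrite dvdn_gcd hdH hdl.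
  by rewrite g (negbTE (prime_not_dvd1 pp)).
exists H; split => // i.
apply/idP/idP => [hi|].
  exact: dvdn_trans hdH (dvd_Y _ hH hi).
case/(dvd_Y_inv pp) => l [hl hil hdl].
by move/forallP: (below l hl hdl) => /(_ i); rewrite hil.
Qed.


Lemma Yn_split n Z Z' H (i : 'I_n) c : 1 <= H <= NN n ->
  (forall h, h != H -> Z h = Z' h) -> Z H = Z' H * c ->
  Yn Z i = Yn Z' i * c ^ eps i H.
Proof.
move=> hH e eH; rewrite /Yn !(split_at _ _ (l := H)) ?ltnS //.
rewrite (eq_bigr (fun h => Z' h ^ eps i h)); last by move=> h /e ->.
by rewrite eH expnMn mulnAC.
Qed.

Lemma sum_lt n (f g : 'I_n -> nat) j : (forall i, f i <= g i) -> f j < g j ->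
  \sum_(i < n) f i < \sum_(i < n) g i.
Proof.
move=> le lt; rewrite (bigD1 j) // [X in _ < X](bigD1 j) //= -addSn.
by apply: leq_add => //; apply: leq_sum.
Qed.

Lemma uniq_core n s Z W : \sum_(j < n) Yn Z j <= s ->
  posn n Z -> posn n W -> redn n Z -> redn n W -> (forall j : 'I_n, Yn Z j = Yn W j) ->
  forall h, 1 <= h <= NN n -> Z h = W h.
Proof.
elim: s Z W => [|s IH] Z W hs PZ PW RZ RW eY.
  move=> h hh; case: (has_digit (h:=h) (n:=n)); first by rewrite -inN.
  move=> j _; have := Yn_pos j PZ; have : Yn Z j <= 0.
    by apply: leq_trans hs; rewrite (bigD1 j) //= leq_addr.
  lia.
case: (boolP [exists j : 'I_n, 1 < Yn Z j]) => [/existsP [j hj]|].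
- pose p := pdiv (Yn Z j).
  have pp : prime p by exact: pdiv_prime.
  have hpj : p %| Yn Z j by exact: pdiv_dvd.
  case: (key PZ RZ pp hpj) => H [hH hdH dH].
  have hpj' : p %| Yn W j by rewrite -eY.
  case: (key PW RW pp hpj') => H' [hH' hdH' dH'].
  have eH : H' = H.
    have := hH; have := hH'; rewrite !inN => /andP [_ l1] /andP [_ l2].
    apply: (digits_inj l1 l2).
    by move=> i; rewrite dH dH' eY.
  subst H'.
  pose Z' h := if h == H then Z h %/ p else Z h.
  pose W' h := if h == H then W h %/ p else W h.
  have p0 : 0 < p by exact: prime_gt0.
  have sZ : forall i : 'I_n, Yn Z i = Yn Z' i * p ^ eps i H.
    move=> i; apply: Yn_split => //; first by move=> h /negbTE; rewrite /Z' => ->.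
    by rewrite /Z' eqxx divnK.
  have sW : forall i : 'I_n, Yn W i = Yn W' i * p ^ eps i H.
    move=> i; apply: Yn_split => //; first by move=> h /negbTE; rewrite /W' => ->.
    by rewrite /W' eqxx divnK.
  have PZ' : posn n Z'.
    move=> h hh; rewrite /Z'; case: ifP => [/eqP ->|_]; last exact: PZ.
    by rewrite divn_gt0 // dvdn_leq // PZ.
  have PW' : posn n W'.
    move=> h hh; rewrite /W'; case: ifP => [/eqP ->|_]; last exact: PW.
    by rewrite divn_gt0 // dvdn_leq // PW.
  have dZ : forall h, Z' h %| Z h.
    by move=> h; rewrite /Z'; case: eqP => [->|_]; [apply: dvdn_div | apply: dvdnn].
  have dW : forall h, W' h %| W h.
    by move=> h; rewrite /W'; case: eqP => [->|_]; [apply: dvdn_div | apply: dvdnn].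
  have RZ' : redn n Z'.
    move=> h l hh hl n1 n2; apply: (coprime_dvdl (dZ h)); apply: (coprime_dvdr (dZ l)).
    exact: RZ.
  have RW' : redn n W'.
    move=> h l hh hl n1 n2; apply: (coprime_dvdl (dW h)); apply: (coprime_dvdr (dW l)).
    exact: RW.
  have eY' : forall i : 'I_n, Yn Z' i = Yn W' i.
    move=> i; have pe : 0 < p ^ eps i H by rewrite expn_gt0 p0.
    by apply/eqP; rewrite -(eqn_pmul2r pe) -sZ -sW eY.
  have hs' : \sum_(j < n) Yn Z' j <= s.
    rewrite -ltnS; apply: leq_trans hs; apply: (sum_lt (j := j)).
      by move=> i; rewrite sZ leq_pmulr // expn_gt0 p0.
    rewrite sZ dH hpj expn1 ltn_Pmulr ?prime_gt1 //.
    by have := Yn_pos j PZ; rewrite sZ muln_gt0 => /andP [].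
  have IH' := IH Z' W' hs' PZ' PW' RZ' RW' eY'.
  move=> h hh; have := IH' h hh; rewrite /Z' /W'; case: ifP => // /eqP -> e.
  by rewrite -(divnK hdH) -(divnK hdH') e.
- move/existsPn => H1.
  move=> h hh; case: (has_digit (h:=h) (n:=n)); first by rewrite -inN.
  move=> j hj; have := H1 j; rewrite -leqNgt => hj1.
  have d1 := dvd_Y Z hh hj; have d2 := dvd_Y W hh hj.
  have e1 : Yn Z j = 1 by have := Yn_pos j PZ; lia.
  rewrite -eY e1 in d2; rewrite e1 in d1.
  by move: d1 d2; rewrite !dvdn1 => /eqP -> /eqP ->.
Qed.


Lemma exist_core n s (y : 'I_n -> nat) : \sum_(j < n) y j <= s -> (forall j, 0 < y j) ->
  exists Z, [/\ posn n Z, redn n Z & forall j, Yn Z j = y j].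
Proof.
elim: s y => [|s IH] y hs py.
  exists (fun _ => 1); split.
  - by move=> *.
  - move=> h l _ _ _ _; exact: coprime1n.
  - move=> j; have := py j; have : y j <= 0.
      by apply: leq_trans hs; rewrite (bigD1 j) //= leq_addr.
    lia.
case: (boolP [exists j : 'I_n, 1 < y j]) => [/existsP [j hj]|].
- pose p := pdiv (y j).
  have pp : prime p by exact: pdiv_prime.
  have hpj : p %| y j by exact: pdiv_dvd.
  have p0 : 0 < p by exact: prime_gt0.
  pose H := code (fun i => p %| y i).
  have hH : 1 <= H <= NN n.
    by rewrite inN (code_pos (j := j)) //= code_lt.
  have eH : forall i : 'I_n, eps i H = (p %| y i) by move=> i; rewrite eps_code.
  pose y' (i : 'I_n) := if p %| y i then y i %/ p else y i.
  have py' : forall i : 'I_n, 0 < y' i.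
    move=> i; rewrite /y'; case: ifP => [d|_]; last exact: py.
    by rewrite divn_gt0 // dvdn_leq.
  have hs' : \sum_(j < n) y' j <= s.
    rewrite -ltnS; apply: leq_trans hs; apply: (sum_lt (j := j)).
      by move=> i; rewrite /y'; case: ifP => // _; apply: leq_div.
    by rewrite /y' hpj ltn_Pdiv ?prime_gt1.
  case: (IH y' hs' py') => Z' [PZ' RZ' YZ'].
  pose Z h := if h == H then Z' h * p else Z' h.
  have sZ : forall i : 'I_n, Yn Z i = Yn Z' i * p ^ eps i H.
    by move=> i; apply: Yn_split => //; [move=> h /negbTE; rewrite /Z => -> | rewrite /Z eqxx].
  exists Z; split.
  + move=> h hh; rewrite /Z; case: ifP => _; last exact: PZ'.
    by rewrite muln_gt0 PZ'.
  + have gen : forall h l, 1 <= h <= NN n -> 1 <= l <= NN n -> h = H -> l != H ->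
        ~~ preceq n h l -> ~~ preceq n l h -> coprime (Z h) (Z l).
      move=> h l hh hl eh nl nhl nlh.
      rewrite /Z eh eqxx (negbTE nl) coprimeMl; apply/andP; split.
        by apply: RZ' => //; rewrite -eh.
      rewrite prime_coprime //; apply/negP => dl.
      move: nlh; rewrite eh => /forallPn [i]; rewrite negb_imply => /andP [il iH].
      have : p %| y' i by rewrite -YZ'; apply: dvdn_trans dl (dvd_Y _ hl il).
      move: iH; rewrite eH => iH; rewrite /y' (negbTE iH) => d.
      by rewrite d in iH.
    move=> h l hh hl nhl nlh.
    case: (eqVneq h H) => eh; case: (eqVneq l H) => el.
    * by move: nhl; rewrite eh el preceq_refl.
    * exact: gen.
    * by rewrite coprime_sym; apply: gen.
    * by rewrite /Z (negbTE eh) (negbTE el); apply: RZ'.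
  + move=> i; rewrite sZ YZ' eH /y'; case: ifP => d; first by rewrite expn1 divnK.
    by rewrite muln1.
- move/existsPn => H1.
  exists (fun _ => 1); split.
  - by move=> *.
  - move=> h l _ _ _ _; exact: coprime1n.
  - move=> j; have := py j; have := H1 j; rewrite /Yn big1 //; first lia.
    by move=> h _; rewrite exp1n.
Qed.

Import Order.TTheory GRing.Theory Num.Theory.
Local Open Scope ring_scope.

Definition Zabs n (z : (NN n).-tuple int) : nat -> nat := fun h => `|zv z h|%N.

Lemma abs_zprod n (z : (NN n).-tuple int) (j : 'I_n) :
  `|zprod z (fun h => nat_of_bool (eps j h))|%N = Yn (Zabs z) j.
Proof.
rewrite /zprod /Yn (big_morph (fun x : int => `|x|%N) abszM (erefl : `|1%R : int|%N = 1%N)).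
by apply: eq_bigr => h _; rewrite abszX.
Qed.

Lemma sdig_split n h (i : 'I_n) : (0 < h < 2 ^ n)%N ->
  (\sum_(k < n | k != i) eps k h = (sdig n h - 1) + (1 - eps i h))%N.
Proof.
move=> hh; case: (has_digit hh) => j hj; have := sdig_ge hj.
have e : sdig n h = (eps i h + \sum_(k < n | k != i) eps k h)%N by rewrite /sdig (bigD1 i).
move: e; set S := \sum_(k < n | k != i) _; move: (sdig n h) => sd.
case: (eps i h) => /=; lia.
Qed.

Lemma prod_rel n (z : (NN n).-tuple int) (i : 'I_n) :
  \prod_(k < n | k != i) zprod z (fun h => nat_of_bool (eps k h)) =
  zprod z (fun h => sdig n h - 1)%N * zprod z (fun h => 1 - eps i h)%N.
Proof.
rewrite /zprod exchange_big /= -big_split /=.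
rewrite big_seq_cond [RHS]big_seq_cond; apply: eq_bigr => h.
rewrite andbT mem_index_iota ltnS => hh.
rewrite prodrXr -exprD sdig_split //; by rewrite -inN.
Qed.

Lemma zprod_neq0 n (z : (NN n).-tuple int) e :
  (forall h, (1 <= h <= NN n)%N -> zv z h != 0) -> zprod z e != 0.
Proof.
move=> nz; rewrite /zprod big_seq prodf_seq_neq0; apply/allP => h.
rewrite mem_index_iota ltnS => hh /=; rewrite hh /=; by apply: expf_neq0; apply: nz.
Qed.


Lemma forward n a : @inA n a -> @inW n (@phiA n a).
Proof.
case: a => x' z [nz red pos eqA].
rewrite /inW /phiA; split.
- apply/prodf_neq0 => i _; rewrite ffunE; exact: zprod_neq0.
- rewrite (eq_bigr (fun i : 'I_n => zprod z (fun h => sdig n h - 1)%N *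
      (zprod z (fun h => 1 - eps i h)%N * zv z (2 ^ i) * x' i))).
    by rewrite -mulr_sumr eqA mulr0.
  move=> i _; rewrite ffunE (eq_bigr (fun j : 'I_n => zprod z (fun h => nat_of_bool (eps j h)))); last first.
    by move=> j _; rewrite ffunE.
  rewrite prod_rel; ring.
Qed.


Lemma posn_abs n (z : (NN n).-tuple int) :
  (forall h, (1 <= h <= NN n)%N -> zv z h != 0) -> posn n (Zabs z).
Proof. by move=> nz h hh; rewrite /Zabs absz_gt0 nz. Qed.

Lemma redn_abs n (z : (NN n).-tuple int) : reduced z -> redn n (Zabs z).
Proof.
move=> R h l hh hl n1 n2; have := R h l hh hl n1 n2.
by rewrite /gcdz /coprime /Zabs => [[->]].
Qed.

Lemma tuple_eq n (z w : (NN n).-tuple int) :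
  (forall h, (1 <= h <= NN n)%N -> zv z h = zv w h) -> z = w.
Proof.
move=> e; apply: val_inj; apply: (@eq_from_nth _ 0); first by rewrite !size_tuple.
move=> i; rewrite size_tuple => hi; have := e i.+1; rewrite /zv /=; apply.
by rewrite /= hi.
Qed.

Lemma injective_part n a b : @inA n a -> @inA n b -> phiA a = phiA b -> a = b.
Proof.
case: a => x1 z [nz red pos eqA]; case: b => x2 w [nw redw posw eqB].
rewrite /phiA => -[e1 e2].
have ex : forall j : 'I_n, zv z (2 ^ j) * x1 j = zv w (2 ^ j) * x2 j.
  by move=> j; have := congr1 (fun f : {ffun 'I_n -> int} => f j) e1; rewrite !ffunE.
have ey : forall j : 'I_n, zprod z (fun h => nat_of_bool (eps j h)) = zprod w (fun h => nat_of_bool (eps j h)).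
  by move=> j; have := congr1 (fun f : {ffun 'I_n -> int} => f j) e2; rewrite !ffunE.
have eA : forall h, (1 <= h <= NN n)%N -> Zabs z h = Zabs w h.
  apply: (@uniq_core n _ _ _ (leqnn _) (posn_abs nz) (posn_abs nw) (redn_abs red) (redn_abs redw)).
  by move=> j; rewrite -!abs_zprod ey.
have e2h : forall h, (1 <= h <= NN n)%N -> (2 <= sdig n h)%N -> zv z h = zv w h.
  move=> h hh hs; rewrite -[zv z h]gtz0_abs ?pos // -[zv w h]gtz0_abs ?posw //.
  by have := eA h hh; rewrite /Zabs => ->.
have eall : forall h, (1 <= h <= NN n)%N -> zv z h = zv w h.
  move=> h hh; case: (leqP 2 (sdig n h)) => hs; first exact: e2h.
  have hh' : (0 < h < 2 ^ n)%N by rewrite -inN.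
  case: (has_digit hh') => j hj.
  have eh : h = (2 ^ j)%N.
    by apply: (sdig_one (proj2 (andP hh')) hj); rewrite -ltnS.
  subst h.
  have := ey j; rewrite /zprod !(split_at _ _ (l := (2 ^ j)%N)) ?ltnS ?pow_inN //.
  rewrite eps_pow eqxx expr1.
  rewrite [X in _ * X = _]big_seq_cond [X in _ = _ * X]big_seq_cond.
  rewrite (eq_bigr (fun l => zv w l ^+ eps j l)); last first.
    move=> l /andP [hl nl]; move: hl; rewrite mem_index_iota ltnS => hl.
    case: (boolP (eps j l)) => ejl; last by rewrite /= !expr0.
    rewrite e2h //; rewrite leqNgt; apply/negP; rewrite ltnS => hs1.
    have hl' : (l < 2 ^ n)%N by move: hl; rewrite inN => /andP [].
    by move: nl; rewrite (sdig_one hl' ejl hs1) eqxx.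
  move/mulIf; apply.
  rewrite prodf_seq_neq0; apply/allP => l; rewrite mem_index_iota ltnS => hl /=.
  apply/implyP => _; apply: expf_neq0; exact: nw.
have ez : z = w by apply: tuple_eq.
subst w; congr pair; apply/ffunP => j.
apply: (mulfI (nz _ (pow_inN j))); exact: ex.
Qed.


Lemma PoszX (m e : nat) : ((m ^ e)%N)%:Z = m%:Z ^+ e.
Proof. by elim: e => [|e IH]; rewrite ?expr0 // expnS exprS PoszM IH. Qed.

Lemma abs_zprod_gen n (z : (NN n).-tuple int) e :
  `|zprod z e|%N = (\prod_(1 <= h < (NN n).+1) Zabs z h ^ e h)%N.
Proof.
rewrite /zprod (big_morph (fun x : int => `|x|%N) abszM (erefl : `|1%R : int|%N = 1%N)).
by apply: eq_bigr => h _; rewrite abszX.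
Qed.

Lemma abs_sgz (x : int) : x != 0 -> `|sgz x|%N = 1%N.
Proof. by case: sgzP. Qed.

Lemma existence n w : @inW n w -> exists a, @inA n a /\ phiA a = w.
Proof.
case: w => x y [ny eqW].
have ny' : forall k, y k != 0 by move/prodf_neq0: ny => H k; apply: H.
pose yn (k : 'I_n) := `|y k|%N.
have pyn : forall k, (0 < yn k)%N by move=> k; rewrite /yn absz_gt0.
case: (exist_core (leqnn (\sum_(j < n) yn j)) pyn) => Z0 [P0 R0 Y0].
pose sg h := \prod_(k < n | h == (2 ^ k)%N) sgz (y k).
pose zh h := (Z0 h)%:Z * sg h.
pose z : (NN n).-tuple int := @Tuple (NN n) int (mkseq (fun i => zh i.+1) (NN n)) (introT eqP (size_mkseq _ _)).
have zvE : forall h, (1 <= h <= NN n)%N -> zv z h = zh h.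
  move=> h /andP [h1 h2]; rewrite /zv /= nth_mkseq; first by rewrite prednK.
  by rewrite -ltnS prednK.

have sg_pow : forall k : 'I_n, sg (2 ^ k)%N = sgz (y k).
  move=> k; rewrite /sg (big_pred1 k) // => k' /=.
  by rewrite eqn_exp2l // eq_sym val_eqE.
have sg_one : forall h, (forall k : 'I_n, h != (2 ^ k)%N) -> sg h = 1.
  by move=> h H; rewrite /sg big_pred0 // => k; apply/negbTE.
have abs_sg : forall h, `|sg h|%N = 1%N.
  move=> h; rewrite /sg (big_morph (fun x : int => `|x|%N) abszM (erefl : `|1%R : int|%N = 1%N)).
  by rewrite big1 // => k _; apply: abs_sgz.
have Zabs_z : forall h, (1 <= h <= NN n)%N -> Zabs z h = Z0 h.
  by move=> h hh; rewrite /Zabs zvE // /zh abszM abs_sg muln1.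
have znz : forall h, (1 <= h <= NN n)%N -> zv z h != 0.
  by move=> h hh; rewrite -absz_gt0 -/(Zabs z h) Zabs_z // P0.
have zprodE : forall e, zprod z e = \prod_(1 <= h < (NN n).+1) zh h ^+ e h.
  move=> e; rewrite /zprod big_seq [RHS]big_seq; apply: eq_bigr => h.
  by rewrite mem_index_iota ltnS => hh; rewrite zvE.
have yrel : forall k : 'I_n, zprod z (fun h => nat_of_bool (eps k h)) = y k.
  move=> k; rewrite zprodE /zh.
  under eq_bigr do rewrite exprMn.
  rewrite big_split /=.
  under eq_bigr do rewrite -PoszX.
  rewrite -(big_morph Posz PoszM (erefl : Posz 1%N = 1)) -/(Yn Z0 k) Y0 /yn.
  rewrite (split_at _ _ (l := (2 ^ k)%N)) ?ltnS ?pow_inN // eps_pow eqxx expr1 sg_pow.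
  rewrite big_seq_cond big1 /=; first by rewrite mulr1 mulrC -intEsg.
  move=> h /andP [hh nh]; case: (boolP (eps k h)) => ekh; last by rewrite expr0.
  rewrite sg_one ?expr1n // => k'; apply/negP => /eqP ehk.
  move: ekh; rewrite ehk eps_pow => /eqP ekk.
  by move: nh; rewrite ehk -ekk eqxx.
pose P (i : 'I_n) := zprod z (fun h => (1 - eps i h)%N).
pose C := zprod z (fun h => (sdig n h - 1)%N).
have Cnz : C != 0 by apply: zprod_neq0.
have eqP' : \sum_(i < n) P i * x i = 0.
  have : C * \sum_(i < n) P i * x i = 0.
    rewrite mulr_sumr -[RHS]eqW; apply: eq_bigr => i _.
    rewrite (eq_bigr (fun j : 'I_n => zprod z (fun h => nat_of_bool (eps j h)))); last by move=> j _; rewrite yrel.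
    rewrite prod_rel /P /C; ring.
  by move/eqP; rewrite mulf_eq0 (negbTE Cnz) /= => /eqP.
have dv : forall j : 'I_n, (zv z (2 ^ j)%N %| x j)%Z.
  move=> j.
  have e : P j * x j = - \sum_(i < n | i != j) P i * x i.
    by have := eqP'; rewrite (bigD1 j) //= => /eqP; rewrite addr_eq0 => /eqP.
  have dP : (zv z (2 ^ j)%N %| P j * x j)%Z.
    rewrite e rpredN; apply: rpred_sum => i ij; apply: dvdz_mulr.
    rewrite /P /zprod (split_at _ _ (l := (2 ^ j)%N)) ?ltnS ?pow_inN // eps_pow.
    by rewrite val_eqE (negbTE ij) expr1; apply: dvdz_mulr; apply: dvdzz.
  rewrite Gauss_dvdzr in dP => //.
  rewrite coprimezE /P abs_zprod_gen -/(Zabs z (2 ^ j)%N).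
  rewrite big_seq; apply: (big_ind (fun m => coprime (Zabs z (2 ^ j)%N) m)).
  - exact: coprimen1.
  - by move=> a b ha hb; rewrite coprimeMr ha hb.
  move=> h; rewrite mem_index_iota ltnS => hh.
  case: (boolP (eps j h)) => ejh; first by rewrite subnn expn0 coprimen1.
  rewrite subn0 expn1 !Zabs_z ?pow_inN //; apply: R0 => //; first exact: pow_inN.
  - apply/forallPn; exists j; by rewrite eps_pow eqxx /= ejh.
  - have hh' : (0 < h < 2 ^ n)%N by rewrite -inN.
    case: (has_digit hh') => i hi; apply/forallPn; exists i.
    rewrite hi eps_pow /=; apply/negP => /eqP eij.
    by move: ejh; rewrite -eij hi.
pose x' := [ffun j : 'I_n => (x j %/ zv z (2 ^ j)%N)%Z].
have xE : forall j : 'I_n, zv z (2 ^ j)%N * x' j = x j.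
  by move=> j; rewrite ffunE mulrC divzK.
exists (x', z); split.
- split.
  + exact: znz.
  + move=> h l hh hl n1 n2; rewrite /gcdz.
    have := R0 h l hh hl n1 n2; rewrite /coprime -!Zabs_z // /Zabs => /eqP ->.
    by [].
  + move=> h hh hs; rewrite zvE // /zh sg_one ?mulr1 ?ltz_nat ?P0 //.
    move=> k; apply/negP => /eqP ehk; move: hs; rewrite ehk sdig_pow.
    by [].
  + rewrite -[RHS]eqP'; apply: eq_bigr => j _; by rewrite -mulrA xE.
- rewrite /phiA; congr pair; apply/ffunP => j; rewrite ffunE.
  + exact: xE.
  + exact: yrel.
Qed.

Local Close Scope ring_scope.

Theorem mainTheorem11 (n : nat) (hn : (3 <= n)%N) :
  (forall a, @inA n a -> @inW n (@phiA n a)) /\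
  (forall a b, @inA n a -> @inA n b -> @phiA n a = @phiA n b -> a = b) /\
  (forall w, @inW n w -> exists a, @inA n a /\ @phiA n a = w).
Proof.
split; first exact: forward.
split; first exact: injective_part.
exact: existence.
Qed.
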